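(* Fix integers $k,r\ge 1$ and $n\ge 0$, and let $\rho(k,r)$ be the density on the two-row shape $(n+1)^2=(n+1,n+1)$ given by $\rho_{1,j}=1$ for $1\le j\le n+1$, $\rho_{2,1}=r-1$, and $\rho_{2,j}=k-1$ for $2\le j\le n+1$. Then $$R_{k,r}(n)=\frac{r}{kn+r}\binom{kn+r}{n}=\bigl|\mathrm{SVT}((n+1)^2,\rho(k,r))\bigr|.$$
   Context: A density on a shape $\lambda$ is an assignment of a nonnegative integer $\rho_{i,j}$ to every cell $(i,j)$ (row $i$, column $j$); let $N=\sum\rho_{i,j}$. A standard set-valued Young tableau of shape $\lambda$ and density $\rho$ assigns to each cell $(i,j)$ a set $S_{i,j}$ with $|S_{i,j}|=\rho_{i,j}$, the sets partitioning $[N]$, such that every element of $S_{i,j}$ is smaller than every element of $S_{i,j+1}$ and of $S_{i+1,j}$ whenever those cells exist (conditions involving an empty set are vacuous). $\mathrm{SVT}(\lambda,\rho)$ is the set of these tableaux. *)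

(* Defs.v *)
From HB Require Import structures.
From mathcomp Require Import all_boot all_order all_algebra.
Set Implicit Arguments. Unset Strict Implicit. Unset Printing Implicit Defensive.

(* Conventions: a shape is a partition lam : seq nat (row lengths, top to
   bottom). Rows and columns are 0-indexed: cell (i,j) lies in lam iff
   i < size lam and j < nth 0 lam i.  A density is rho : nat -> nat -> nat
   (values outside the shape are irrelevant).  The ground set [N] = {1..N}
   is represented by 'I_N = {0..N-1} (order isomorphic). A set-valued
   tableau (the family of sets S_{i,j} partitioning [N]) is encoded by the
   map sending each element x of [N] to the cell whose set contains x. *)

Definition in_shape (lam : seq nat) (c : nat * nat) : bool :=
  (c.1 < size lam) && (c.2 < nth 0 lam c.1).

Definition shape_width (lam : seq nat) : nat := foldr maxn 0 lam.

Definition svtN (lam : seq nat) (rho : nat -> nat -> nat) : nat :=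
  \sum_(i < size lam) \sum_(j < nth 0 lam i) rho i j.

Definition cell_of (lam : seq nat) := ('I_(size lam) * 'I_(shape_width lam))%type.

Definition cnat (lam : seq nat) (c : cell_of lam) : nat * nat :=
  (nat_of_ord c.1, nat_of_ord c.2).

Definition is_svt (lam : seq nat) (rho : nat -> nat -> nat)
    (f : {ffun 'I_(svtN lam rho) -> cell_of lam}) : bool :=
  [&&
      [forall x, in_shape lam (cnat (f x))],
      [forall c : cell_of lam, in_shape lam (cnat c) ==>
          (#|[set x | f x == c]| == rho c.1 c.2)],
      [forall x, forall y,
          ((cnat (f y)).1 == (cnat (f x)).1) &&
          ((cnat (f y)).2 == (cnat (f x)).2.+1) ==> (x < y)] &
      [forall x, forall y,
          ((cnat (f y)).1 == (cnat (f x)).1.+1) &&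
          ((cnat (f y)).2 == (cnat (f x)).2) ==> (x < y)]].

Definition svt_count (lam : seq nat) (rho : nat -> nat -> nat) : nat :=
  #|[pred f : {ffun 'I_(svtN lam rho) -> cell_of lam} | is_svt f]|.

Definition rho_kr (k r : nat) (i j : nat) : nat :=
  if i == 0 then 1 else if j == 0 then r - 1 else k - 1.

Definition two_row (n : nat) : seq nat := [:: n.+1; n.+1].

(* Main.v *)
Require Import Defs.
From HB Require Import structures.
From mathcomp Require Import all_boot all_order all_algebra.
Import GRing.Theory Num.Theory.
From mathcomp Require Import zify ring lra.
Set Implicit Arguments. Unset Strict Implicit. Unset Printing Implicit Defensive.


Fixpoint allbs (m : nat) : seq (seq bool) :=
  if m is m'.+1 then map (cons true) (allbs m') ++ map (cons false) (allbs m')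
  else [:: [::]].

Lemma mem_allbs m w : (w \in allbs m) = (size w == m).
Proof.
elim: m w => [|m IH] [|b w] //=.
- by rewrite mem_cat; apply/orP => -[] /mapP [?].
- have it : injective (cons true) by move=> ? ? [].
  have if' : injective (cons false) by move=> ? ? [].
  rewrite mem_cat eqSS -IH; case: b.
  + rewrite mem_map //.
    by case: (w \in allbs m) => //=; apply/mapP => -[?].
  + rewrite (mem_map if').
    by case: (w \in allbs m) => //=; rewrite ?orbT //= orbF; apply/mapP => -[?].
Qed.

Lemma allbs_uniq m : uniq (allbs m).
Proof.
elim: m => //= m IH.
have it : injective (cons true) by move=> ? ? [].
have if' : injective (cons false) by move=> ? ? [].
rewrite cat_uniq (map_inj_uniq it) (map_inj_uniq if') IH /= andbT.
apply/hasPn => x /mapP [y _ ->]; apply/mapP => -[?] //.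
Qed.

Section Count.
Variable K : nat.

Fixpoint bal (s : nat) (w : seq bool) : bool :=
  match w with
  | [::] => true
  | true :: w' => (0 < s) && bal s.-1 w'
  | false :: w' => bal (s + K) w'
  end.

Lemma bal_pref s w :
  bal s w <-> (forall i, count id (take i w) <= K * count negb (take i w) + s).
Proof.
elim: w s => [|b w IH] s /=.
  by split => // _ i; rewrite take0 /=.
case: b.
- split.
  + move=> /andP [s0 /IH H] [|i] /=; first lia.
    have := H i; lia.
  + move=> H; have h1 := H 1; rewrite /= take0 /= in h1.
    apply/andP; split; first lia.
    apply/IH => i; have := H i.+1; rewrite /=; lia.
- split.
  + move=> /IH H [|i] /=; first lia.
    have := H i; lia.
  + move=> H; apply/IH => i; have := H i.+1; rewrite /=; lia.
Qed.

Definition gcf (y s : nat) : rat :=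
  (('C(K * y + s + y, y))%:R - K%:R * (if y is y'.+1 then ('C(K * y + s + y, y'))%:R else 0))%R.

Lemma count_bal L : forall y s, K * y + s + y = L ->
  ((count (fun w => bal s w && (count negb w == y)) (allbs L))%:R = gcf y s)%R.
Proof.
elim: L => [|L IH] y s hL.
  have -> : y = 0 by lia. have -> : s = 0 by lia.
  by rewrite /gcf /= mulr0 subr0 bin0.
rewrite /= count_cat !count_map.
have -> : count (preim (cons true) (fun w => bal s w && (count negb w == y))) (allbs L)
   = if s is s'.+1 then count (fun w => bal s' w && (count negb w == y)) (allbs L) else 0.
  case: s hL => [|s'] hL /=; first by rewrite count_pred0.
  by apply: eq_count => w /=.
have -> : count (preim (cons false) (fun w => bal s w && (count negb w == y))) (allbs L)
   = if y is y'.+1 then count (fun w => bal (s + K) w && (count negb w == y')) (allbs L) else 0.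
  case: y hL => [|y'] hL /=.
    rewrite (@eq_count _ _ pred0) ?count_pred0 // => w /=; by rewrite add1n andbF.
  by apply: eq_count => w /=; rewrite add1n eqSS.
case: s hL => [|s'] hL; case: y hL => [|y'] hL.
- lia.
- rewrite add0n (IH y' K); last lia.
  rewrite /gcf.
  have -> : (K * y'.+1 + 0 + y'.+1 = L.+1)%N by lia.
  have -> : (K * y' + K + y' = L)%N by lia.
  have hb : ('C(L, y'.+1) = K * 'C(L, y'))%N.
    have h := mul_bin_left L y'.
    rewrite (_ : (L - y' = y'.+1 * K)%N) in h; last lia.
    by apply/eqP; rewrite -(eqn_pmul2l (ltn0Sn y')) h mulnA.
  rewrite !binS hb.
  case: y' {IH hL hb} => [|y''] /=; rewrite ?bin0 !natrD !natrM; ring.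
- rewrite addn0 (IH 0 s'); last lia.
  by rewrite /gcf /= !bin0 mulr0.
- rewrite natrD (IH y'.+1 s'); last lia.
  rewrite (IH y' (s'.+1 + K)); last lia.
  rewrite /gcf.
  have -> : (K * y'.+1 + s'.+1 + y'.+1 = L.+1)%N by lia.
  have -> : (K * y'.+1 + s' + y'.+1 = L)%N by lia.
  have -> : (K * y' + (s'.+1 + K) + y' = L)%N by lia.
  rewrite !binS.
  case: y' {IH hL} => [|y''] /=; rewrite ?bin0 ?binS !natrD; ring.
Qed.
End Count.


Definition rho' (K s i j : nat) := if i == 0 then 1 else if j == 0 then s else K.

Section Tab.
Variables (N n K s : nat) (R C : 'I_N -> nat).
Hypotheses (HR : forall x, R x <= 1) (HC : forall x, C x <= n)
 (Hcard : forall i j, i <= 1 -> j <= n ->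
     #|[set x | (R x == i) && (C x == j)]| = rho' K s i j)
 (Hrow : forall x y, R y = R x -> C y = (C x).+1 -> x < y)
 (Hcol : forall x y, R y = (R x).+1 -> C y = C x -> x < y).

Lemma nonempty i j : i <= 1 -> j <= n -> 0 < rho' K s i j ->
  exists z, R z = i /\ C z = j.
Proof.
move=> hi hj; rewrite -(Hcard hi hj) card_gt0 => /set0Pn [z].
by rewrite inE => /andP [/eqP h1 /eqP h2]; exists z.
Qed.

Lemma Kpos y : R y = 1 -> 0 < C y -> 0 < K.
Proof.
move=> hR hC; have := Hcard (i:=1) (j:=C y) (leqnn 1) (HC y).
have -> : rho' K s 1 (C y) = K by rewrite /rho' /= (gtn_eqF hC).
move <-; by rewrite card_gt0; apply/set0Pn; exists y; rewrite inE hR !eqxx.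
Qed.

Lemma mono_lt x y : R x = R y -> C x < C y -> x < y.
Proof.
move=> hR hC.
have hpos : forall j, 0 < j -> 0 < rho' K s (R x) j.
  move=> j hj; rewrite /rho'; case: eqP => // hx.
  have hx1 : R y = 1 by have := HR x; lia.
  rewrite (gtn_eqF hj); apply: (Kpos hx1); lia.
have key : forall d z, R z = R x -> C z = C x + d.+1 -> x < z.
  elim=> [|d IH] z hz hcz; first by apply: Hrow => //; lia.
  have hle : C x + d.+1 <= n by have := HC z; lia.
  have hp : 0 < rho' K s (R x) (C x + d.+1) by apply: hpos; lia.
  have [z' [h1 h2]] := nonempty (HR x) hle hp.
  apply: (ltn_trans (IH z' h1 h2)); apply: Hrow; lia.
have := key (C y - C x).-1 y (esym hR); apply; lia.
Qed.

Definition S i c := #|[set z | (R z == i) && (C z < c)]|.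

Lemma S0 i : S i 0 = 0.
Proof. by apply/eqP; rewrite cards_eq0; apply/eqP/setP => z; rewrite !inE ltn0 andbF. Qed.

Lemma S_succ i c : i <= 1 -> c <= n -> S i c.+1 = S i c + rho' K s i c.
Proof.
move=> hi hc; rewrite /S -(cardsID [set z | C z == c]) -(Hcard hi hc) [RHS]addnC.
congr (_ + _); apply: eq_card => z; rewrite !inE ltnS.
- by case: (ltngtP (C z) c); rewrite ?andbF ?andbT.
- by case: (ltngtP (C z) c); rewrite ?andbF ?andbT.
Qed.

Lemma S0c c : c <= n.+1 -> S 0 c = c.
Proof.
elim: c => [|c IH] hc; first exact: S0.
rewrite S_succ // IH //; last exact: ltnW.
by rewrite addn1.
Qed.

Lemma S1c c : c <= n.+1 -> S 1 c = if c is c'.+1 then s + K * c' else 0.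
Proof.
elim: c => [|c IH] hc; first exact: S0.
rewrite S_succ // IH; last exact: ltnW.
rewrite /rho' /=; case: c {IH hc} => [|c] /=; lia.
Qed.

Definition cnt i (x : 'I_N) := #|[set z | (R z == i) && (z < x)]|.
Definition Dc (x : 'I_N) := #|[set z | (R z == R x) && (C z == C x) && (z < x)]|.

Lemma rank x : cnt (R x) x = S (R x) (C x) + Dc x.
Proof.
rewrite /cnt /S /Dc -(cardsID [set z | C z < C x]); congr (_ + _);
  apply: eq_card => z; rewrite !inE.
- case: eqP => //= hz; case h: (C z < C x); rewrite ?andbF ?andbT //.
  by apply: mono_lt.
- case: eqP => //= hz; case: (ltngtP (C z) (C x)) => h /=; rewrite ?andbF //.
  apply/negbTE; rewrite -leqNgt ltnW //; exact: mono_lt.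
Qed.

Lemma Dc_lt x : Dc x < rho' K s (R x) (C x).
Proof.
rewrite -(Hcard (HR x) (HC x)); apply: proper_card; apply/properP; split.
  by apply/subsetP => z; rewrite !inE => /andP [/andP [-> ->]].
by exists x; rewrite !inE ?ltnn ?andbF ?eqxx.
Qed.

Lemma cnt0_row0 x : R x = 0 -> cnt 0 x = C x.
Proof.
move=> h; have := rank x; have := Dc_lt x; rewrite h S0c; last exact: leqW (HC x).
rewrite /rho' /=; lia.
Qed.

Lemma cnt1_row1 x : R x = 1 ->
  S 1 (C x) <= cnt 1 x < S 1 (C x) + rho' K s 1 (C x).
Proof. move=> h; have := rank x; have := Dc_lt x; rewrite h; lia. Qed.

Lemma cnt0_row1 y : R y = 1 -> C y < cnt 0 y.
Proof.
move=> hy; have e : S 0 (C y).+1 = (C y).+1 by apply: S0c; rewrite ltnS HC.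
apply: (@leq_trans (S 0 (C y).+1)); first by rewrite e.
apply: subset_leq_card; apply/subsetP => z; rewrite !inE ltnS.
case/andP => /eqP hz hcz; rewrite hz eqxx /=.
have [z' [h1 h2]] := @nonempty 0 (C y) (leq0n _) (HC y) (ltn0Sn 0).
have hz'y : z' < y by apply: Hcol; lia.
case: (ltngtP (C z) (C y)) hcz => // hc _.
- apply: (ltn_trans _ hz'y); apply: mono_lt; lia.
- apply: Hcol; lia.
Qed.

Lemma tot0 : #|[set z | R z == 0]| = n.+1.
Proof.
rewrite -(S0c (leqnn n.+1)); apply: eq_card => z; rewrite !inE ltnS HC.
by rewrite andbT.
Qed.

Lemma tab_facts : 
  [/\ (forall x, R x = 0 -> cnt 0 x = C x),
      (forall x, R x = 1 -> (if C x is c'.+1 then s + K * c' else 0) <= cnt 1 x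
                          /\ cnt 1 x < s + K * C x),
      (forall y, R y = 1 -> C y < cnt 0 y) &
      #|[set z | R z == 0]| = n.+1].
Proof using HR HC Hcard Hrow Hcol.
split.
- exact: cnt0_row0.
- move=> x hx; have /andP [a b] := cnt1_row1 hx.
  have e := S1c (leqW (HC x)).
  rewrite e /rho' /= in a b; move: a b; case: (C x) => [|c] /= a b.
    by rewrite muln0 addn0; split.
  by split => //; rewrite mulnS; lia.
- exact: cnt0_row1.
- exact: tot0.
Qed.
End Tab.


Lemma card_step N (Q : nat -> bool) m : m < N ->
  #|[set y : 'I_N | (y < m.+1) && Q y]| = #|[set y : 'I_N | (y < m) && Q y]| + Q m.
Proof.
move=> hm; case hQ: (Q m).
- have e : [set y : 'I_N | (y < m.+1) && Q y] = Ordinal hm |: [set y : 'I_N | (y < m) && Q y].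
    apply/setP => z; rewrite !inE ltnS leq_eqVlt -val_eqE /=.
    by case: eqP => [->|] //=; rewrite hQ.
  by rewrite e cardsU1 inE /= ltnn /= add1n addn1.
- rewrite addn0; apply: eq_card => z; rewrite !inE ltnS leq_eqVlt.
  by case: eqP => //= ->; rewrite hQ andbF.
Qed.

Section SeqSide.
Variables (N : nat) (w : seq bool).
Hypothesis hw : size w = N.

Lemma cp_succ (p : pred bool) y : y < N ->
  count p (take y.+1 w) = count p (take y w) + p (nth false w y).
Proof.
by move=> hy; rewrite (take_nth false) ?hw // -cats1 count_cat /= addn0.
Qed.

Lemma bridge (p : pred bool) y :
  count p (take y w) = #|[set z : 'I_N | (z < y) && p (nth false w z)]|.
Proof.
elim: y => [|y IH].
  by rewrite take0 /=; apply/esym/eqP; rewrite cards_eq0; apply/eqP/setP => z; rewrite !inE.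
case: (ltnP y N) => hy.
  by rewrite cp_succ // IH (card_step (fun z => p (nth false w z)) hy).
have e : take y.+1 w = take y w by rewrite !take_oversize ?hw //; apply: leqW.
rewrite e IH; apply: eq_card => z; rewrite !inE.
have h1 : z < y := leq_trans (ltn_ord z) hy.
by rewrite ltnS (ltnW h1) h1.
Qed.

Lemma interval_pre (p : pred bool) t m : m <= N ->
  #|[set y : 'I_N | (y < m) && (p (nth false w y) && (count p (take y w) < t))]|
  = minn t (count p (take m w)).
Proof.
elim: m => [|m IH] hm.
  rewrite take0 /= minn0; apply/eqP; rewrite cards_eq0; apply/eqP/setP => z; rewrite !inE.
  by [].
rewrite (card_step (fun y => p (nth false w y) && (count p (take y w) < t)) hm).
rewrite IH; last exact: ltnW.
rewrite cp_succ //.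
set c := count p (take m w).
case: (p (nth false w m)) => /=; rewrite ?addn0 ?addn1 //.
case: (ltnP c t) => h /=.
- by rewrite (minn_idPr h) addn1.
- by rewrite (minn_idPl (leqW h)) addn0.
Qed.

Lemma interval (p : pred bool) t :
  #|[set y : 'I_N | p (nth false w y) && (count p (take y w) < t)]|
  = minn t (count p w).
Proof.
have e : count p w = count p (take N w) by rewrite -hw take_size.
rewrite e -interval_pre //; apply: eq_card => z; rewrite !inE.
by rewrite ltn_ord.
Qed.

Lemma interval2 (p : pred bool) lo hi : lo <= hi ->
  #|[set y : 'I_N | p (nth false w y) && (lo <= count p (take y w) < hi)]|
  = minn hi (count p w) - minn lo (count p w).
Proof.
move=> hl; rewrite -!interval -(cardsID [set y : 'I_N | count p (take y w) < lo]
   [set y : 'I_N | p (nth false w y) && (count p (take y w) < hi)]).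
rewrite -[X in _ = _ + _ - X](@eq_card _ ([set y : 'I_N | p (nth false w y) && (count p (take y w) < hi)]
   :&: [set y : 'I_N | count p (take y w) < lo])); last first.
  move=> z; rewrite !inE; case: (p _) => //=; case: (ltnP (count p (take z w)) lo) => h /=;
   rewrite ?andbF ?andbT //; by rewrite (leq_trans h hl).
rewrite addKn; apply: eq_card => z; rewrite !inE.
case: (p _) => //=; case: (ltnP (count p (take z w)) lo) => h //=; by rewrite andbF.
Qed.

Lemma cp_mono (p : pred bool) y y' : y <= y' -> count p (take y w) <= count p (take y' w).
Proof.
move=> h; rewrite -(subnKC h) takeD count_cat; exact: leq_addr.
Qed.
End SeqSide.


Section Col1.
Variables (K s n : nat).
Definition colr1 t := if t < s then 0 else ((t - s) %/ K).+1.

Lemma colr1_mono t t' : t <= t' -> colr1 t <= colr1 t'.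
Proof.
rewrite /colr1 => h; case: (ltnP t s) => h1; case: (ltnP t' s) => h2 //; first lia.
by rewrite ltnS leq_div2r // leq_sub2r.
Qed.

Lemma colr1_le t : t < K * n + s -> colr1 t <= n.
Proof.
rewrite /colr1 => h; case: ltnP => // h1.
have hK : 0 < K by case: K h h1 => //; rewrite mul0n add0n; lia.
by rewrite ltn_divLR // mulnC; lia.
Qed.

Lemma colr1_lb t : s <= t -> s + K * (colr1 t).-1 <= t.
Proof.
rewrite /colr1 => h; rewrite ltnNge h /=.
have := leq_trunc_div (t - s) K; rewrite mulnC; lia.
Qed.

Lemma colr1_eq0 t : (colr1 t == 0) = (t < s).
Proof. by rewrite /colr1; case: ltnP. Qed.

Lemma colr1_eq t j : t < K * n + s -> 0 < j ->
  (colr1 t == j) = (s + K * j.-1 <= t < s + K * j).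
Proof.
move=> h; case: j => // m _ /=; rewrite /colr1; case: ltnP => h1.
  by symmetry; apply/negbTE; rewrite negb_and -!ltnNge; apply/orP; left; lia.
have hK : 0 < K by case: K h h1 => //; rewrite mul0n add0n; lia.
rewrite eqSS eqn_leq leq_divRL // -ltnS ltn_divLR //.
rewrite (mulnC m) (mulnC m.+1) mulnS.
apply/andP/andP => -[a b]; split; lia.
Qed.
End Col1.


Lemma hW n : shape_width (two_row n) = n.+1.
Proof. by rewrite /shape_width /= maxn0 maxnn. Qed.

Lemma hN k r n : 0 < k -> 0 < r ->
  svtN (two_row n) (rho_kr k r) = k.-1 * n + r.-1 + n + 1.
Proof.
move=> hk hr; rewrite /svtN big_ord_recr big_ord_recr big_ord0 /=.
have e0 : \sum_(j < n.+1) rho_kr k r 0 j = n.+1.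
  by rewrite (eq_bigr (fun _ => 1)) // sum_nat_const card_ord muln1.
have e1 : \sum_(j < n.+1) rho_kr k r 1 j = r.-1 + n * k.-1.
  rewrite big_ord_recl (eq_bigr (fun _ => k.-1)) ?sum_nat_const ?card_ord.
    by rewrite /rho_kr /= subn1.
  by move=> i _; rewrite /rho_kr /= subn1.
rewrite e0 e1; lia.
Qed.

Lemma nth_two n (i : 'I_2) : nth 0 (two_row n) i = n.+1.
Proof. by case: i => [[|[|i]] hi]. Qed.

Lemma in_shape_two n (c : cell_of (two_row n)) : in_shape (two_row n) (cnat c) = (c.2 <= n).
Proof. by rewrite /in_shape /cnat /= (ltn_ord c.1) nth_two. Qed.

Section Iff.
Variables (k r n : nat).
Hypotheses (hk : 0 < k) (hr : 0 < r).
Local Notation N := (svtN (two_row n) (rho_kr k r)).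

Lemma rho_eq i j : rho_kr k r i j = rho' k.-1 r.-1 i j.
Proof. by rewrite /rho_kr /rho' !subn1. Qed.

Lemma svt_iff (f : {ffun 'I_N -> cell_of (two_row n)}) :
  is_svt f <->
  [/\ (forall x, val (f x).2 <= n),
      (forall i j, i <= 1 -> j <= n ->
         #|[set x | (val (f x).1 == i) && (val (f x).2 == j)]| = rho' k.-1 r.-1 i j),
      (forall x y, val (f y).1 = val (f x).1 -> val (f y).2 = (val (f x).2).+1 -> x < y) &
      (forall x y, val (f y).1 = (val (f x).1).+1 -> val (f y).2 = val (f x).2 -> x < y)].
Proof.
rewrite /is_svt; split.
- case/and4P => /forallP H1 /forallP H2 /forallP H3 /forallP H4; split.
  + by move=> x; have := H1 x; rewrite in_shape_two.
  + move=> i j hi hj.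
    have hj' : j < shape_width (two_row n) by rewrite hW.
    have := H2 (Ordinal (hi : i < 2), Ordinal hj').
    rewrite in_shape_two /= hj /= => /eqP; rewrite -rho_eq => <-.
    apply: eq_card => x; rewrite !inE; case: (f x) => a b.
    by [].
  + move=> x y h1 h2; move: (H3 x) => /forallP /(_ y) /implyP; apply.
    by rewrite /cnat /= h1 h2 !eqxx.
  + move=> x y h1 h2; move: (H4 x) => /forallP /(_ y) /implyP; apply.
    by rewrite /cnat /= h1 h2 !eqxx.
- case=> H1 H2 H3 H4; apply/and4P; split.
  + by apply/forallP => x; rewrite in_shape_two H1.
  + apply/forallP => c; apply/implyP; rewrite in_shape_two => hc.
    rewrite rho_eq -H2 //; last exact: (ltn_ord c.1).
  + apply/forallP => x; apply/forallP => y; apply/implyP => /andP [/eqP h1 /eqP h2].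
    exact: H3.
  + apply/forallP => x; apply/forallP => y; apply/implyP => /andP [/eqP h1 /eqP h2].
    exact: H4.
Qed.
End Iff.


Section Main.
Variables (k r n : nat).
Hypotheses (hk : 0 < k) (hr : 0 < r).
Local Notation N := (svtN (two_row n) (rho_kr k r)).
Local Notation K := k.-1.
Local Notation s := r.-1.
Local Notation cellT := (cell_of (two_row n)).

Definition hseq (f : {ffun 'I_N -> cellT}) : seq bool :=
  [seq val (f y).1 == 1 | y <- enum 'I_N].

Lemma size_hseq f : size (hseq f) = N.
Proof. by rewrite size_map size_enum_ord. Qed.

Lemma nth_hseq f (y : 'I_N) : nth false (hseq f) y = (val (f y).1 == 1).
Proof. by rewrite (nth_map y) ?size_enum_ord // nth_ord_enum. Qed.

Definition Pw (w : seq bool) : bool :=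
  if w is false :: w' then bal K s w' && (count negb w' == n) else false.

Definition colw (w : seq bool) (y : nat) : nat :=
  if nth false w y then colr1 K s (count id (take y w)) else count negb (take y w).

Definition build (w : seq bool) : {ffun 'I_N -> cellT} :=
  [ffun y : 'I_N => (inord (nth false w y), cast_ord (esym (hW n)) (inord (colw w y)))].

Lemma N_gt0 : 0 < N.
Proof. rewrite hN //; lia. Qed.


Lemma part_i f : is_svt f -> Pw (hseq f) /\ f = build (hseq f).
Proof.
move/svt_iff => [H1 H2 H3 H4].
pose R := fun x : 'I_N => val (f x).1.
pose C := fun x : 'I_N => val (f x).2.
have HR : forall x, R x <= 1 by move=> x; rewrite -ltnS ltn_ord.
have [F0 F1 F2 F3] := @tab_facts N n K s R C HR H1 H2 H3 H4.
set w := hseq f.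
have hwsz : size w = N := size_hseq f.
have hb : forall y : 'I_N, nth false w y = (R y == 1) := nth_hseq f.
have e1 : forall y : 'I_N, count id (take y w) = cnt R 1 y.
  move=> y; rewrite (bridge hwsz); apply: eq_card => z; rewrite !inE hb andbC.
  by [].
have e0 : forall y : 'I_N, count negb (take y w) = cnt R 0 y.
  move=> y; rewrite (bridge hwsz); apply: eq_card => z; rewrite !inE hb andbC.
  by have := HR z; case: (R z) => [|[|]].
have ball : forall y : 'I_N, R y = 1 -> count id (take y w) + 1 + K <= K * count negb (take y w) + s.
  move=> y hy; rewrite e1 e0; have [_ h] := F1 y hy; have h2 := F2 y hy.
  have : K * (C y).+1 <= K * cnt R 0 y by apply: leq_mul.
  rewrite mulnS; lia.
have Hcol : forall y : 'I_N, C y <= n := H1.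
have colE : forall y : 'I_N, colw w y = C y.
  move=> y; rewrite /colw hb.
  have := HR y; case hRy: (R y) => [|[|//]] _ /=.
    by rewrite e0 F0.
  have [hl hu] := F1 y hRy; rewrite e1.
  have hlt : cnt R 1 y < K * n + s.
    apply: (leq_trans hu); rewrite addnC leq_add2r; exact: leq_mul.
  case hC: (C y) hl hu => [|c] hl hu.
    by apply/eqP; rewrite colr1_eq0; rewrite muln0 addn0 in hu.
  by apply/eqP; rewrite (colr1_eq hlt) //= hl hu.
split; last first.
  apply/ffunP => y; rewrite ffunE.
  have -> : f y = ((f y).1, (f y).2) by case: (f y).
  congr (_, _); apply: val_inj => /=.
    rewrite inordK; last by case: (nth false w y).
    rewrite hb /R; by case: (f y).1 => [[|[|m]] hm].
  by rewrite inordK colE // ltnS Hcol.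
have tot : count negb w = n.+1.
  rewrite -F3 -{1}(take_size w) hwsz (bridge hwsz); apply: eq_card => z; rewrite !inE hb ltn_ord /=.
  by have := HR z; case: (R z) => [|[|]].
have x0 := Ordinal N_gt0.
have b0 : nth false w 0 = false.
  have := hb (Ordinal N_gt0) => /= ->; apply/negbTE/eqP => h.
  have := F2 (Ordinal N_gt0) h.
  suff -> : cnt R 0 (Ordinal N_gt0) = 0 by [].
  by apply/eqP; rewrite cards_eq0; apply/eqP/setP => z; rewrite !inE /= ltn0 andbF.
have claim : forall m, count id (take m.+1 w) + K <= K * count negb (take m.+1 w) + s.
  elim=> [|m IH].
    rewrite (take_nth false) ?hwsz ?N_gt0 // take0 /= b0 /= muln1; lia.
  case: (ltnP m.+1 N) => hm.
    have hbm := hb (Ordinal hm); rewrite /= in hbm.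
    rewrite (cp_succ hwsz id hm) (cp_succ hwsz negb hm) hbm.
    have := ball (Ordinal hm); rewrite /=.
    case: (R (Ordinal hm) == 1) / eqP => [h /(_ h)|_ _] /=; first lia.
    rewrite addn0 addn1 mulnS; lia.
  by rewrite !take_oversize ?hwsz // in IH *; apply: leqW.
move: hwsz b0 claim tot; clear hb e1 e0 ball colE; clearbody w; case: w => [|b w'] //=.
move=> _ -> claim tot /=; apply/andP; split.
  apply/bal_pref => i; have := claim i; rewrite /= mulnDr muln1; lia.
by rewrite add1n in tot; apply/eqP; case: tot.
Qed.

Lemma part_ii w : Pw w -> size w = N -> is_svt (build w) /\ hseq (build w) = w.
Proof.
move=> hP hsz.
have hNv : N = K * n + s + n + 1 := hN n hk hr.
case ew: w hP => [|b w'] //; case: b ew => // ew /andP [hbal /eqP hneg].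
rewrite -ew.
have tot0 : count negb w = n.+1 by rewrite ew /= hneg.
have tot1 : count id w = K * n + s.
  have e : count (predC id) w = count negb w by apply: eq_count.
  have := count_predC id w; rewrite e tot0 hsz; lia.
have b0 : nth false w 0 = false by rewrite ew.
pose c1 y := count id (take y w).
pose c0 y := count negb (take y w).
have ballot : forall y, y < N -> nth false w y -> 0 < c0 y /\ c1 y + 1 + K <= K * c0 y + s.
  move=> [|y] hy hby; first by rewrite b0 in hby.
  have /bal_pref hb0 := hbal; have hbl := hb0 y.+1.
  have e1 : count id (take y.+2 w) = count id (take y.+1 w') by rewrite ew.
  have e0 : count negb (take y.+2 w) = (count negb (take y.+1 w')).+1 by rewrite ew.
  have s1 := cp_succ hsz id hy; have s0 := cp_succ hsz negb hy.
  rewrite hby /= in s1 s0.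
  rewrite /c1 /c0.
  have hd : count negb (take y.+1 w) = (count negb (take y.+1 w')).+1 by lia.
  rewrite hd mulnS; split => //; lia.
have c1lt : forall y, y < N -> nth false w y -> c1 y < K * n + s.
  move=> y hy hby; have h := cp_succ hsz id hy; rewrite hby /= in h.
  have hm := @cp_mono w id y.+1 N hy; rewrite (take_oversize (n:=N)) ?hsz // in hm.
  rewrite /c1; lia.
have c0lt : forall y, y < N -> ~~ nth false w y -> c0 y < n.+1.
  move=> y hy hby; have h := cp_succ hsz negb hy; rewrite hby /= in h.
  have hm := @cp_mono w negb y.+1 N hy; rewrite (take_oversize (n:=N)) ?hsz // in hm.
  rewrite /c0; lia.
have colw_le : forall y, y < N -> colw w y <= n.
  move=> y hy; rewrite /colw; case hby: (nth false w y).
    exact: (colr1_le (c1lt y hy hby)).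
  by rewrite -ltnS; apply: c0lt; rewrite ?hby.
have bR : forall y : 'I_N, val (build w y).1 = nth false w y.
  by move=> y; rewrite ffunE /= inordK //; case: (nth false w y).
have bC : forall y : 'I_N, val (build w y).2 = colw w y.
  by move=> y; rewrite ffunE /= inordK // ltnS colw_le.
split; last first.
  apply: (@eq_from_nth _ false); first by rewrite size_hseq hsz.
  move=> i; rewrite size_hseq => hi.
  have := nth_hseq (build w) (Ordinal hi); rewrite /= => ->.
  by rewrite bR; case: (nth false w i).
apply/svt_iff; split.
- by move=> x; rewrite bC colw_le.
- move=> i j hi hj; case: i hi => [|[|//]] _.
  + rewrite (@eq_card _ _ [set y : 'I_N | negb (nth false w y) && (j <= count negb (take y w) < j.+1)]).
      rewrite (interval2 hsz) // tot0 /rho' /=.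
      rewrite (minn_idPl (_ : j.+1 <= n.+1)) // (minn_idPl (_ : j <= n.+1)) ?subSnn //.
      exact: leqW.
    move=> x; rewrite !inE bR bC /colw; case: (nth false w x) => //=.
    by rewrite ltnS eqn_leq andbC.
  + case: j hj => [|j] hj.
    * rewrite (@eq_card _ _ [set y : 'I_N | (nth false w y) && (0 <= count id (take y w) < s)]).
        rewrite (interval2 hsz) // tot1 /rho' /= (minn_idPl (_ : s <= K * n + s)) ?leq_addl //.
        by rewrite min0n subn0.
      move=> x; rewrite !inE bR bC /colw; case: (nth false w x) => //=.
      by rewrite colr1_eq0.
    * rewrite (@eq_card _ _ [set y : 'I_N | (nth false w y) && (s + K * j <= count id (take y w) < s + K * j.+1)]).
        rewrite (interval2 hsz); last by rewrite leq_add2l leq_mul2l leqnSn orbT.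
        rewrite tot1 /rho' /=.
        rewrite (minn_idPl (_ : s + K * j.+1 <= K * n + s)); last by rewrite addnC leq_add2r leq_mul2l hj orbT.
        rewrite (minn_idPl (_ : s + K * j <= K * n + s)); last by rewrite addnC leq_add2r leq_mul2l (ltnW hj) orbT.
        rewrite mulnS; lia.
      move=> x; rewrite !inE bR bC /colw; case hx: (nth false w x) => //=.
      by rewrite (colr1_eq (c1lt x (ltn_ord x) hx)).
- move=> x y; rewrite !bR !bC /colw.
  case hx: (nth false w x); case hy: (nth false w y) => //= _ hC;
    case: (ltnP x y) => // hyx; exfalso.
  + have := colr1_mono K s (cp_mono w id hyx); lia.
  + have := cp_mono w negb hyx; lia.
- move=> x y; rewrite !bR !bC /colw.
  case hx: (nth false w x); case hy: (nth false w y) => //= _ hC;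
    case: (ltnP x y) => // hyx; exfalso.
  have [h1 h2] := ballot y (ltn_ord y) hy.
  have h3 := cp_mono w negb hyx.
  have h4 : K * c0 y <= K * c0 x by apply: leq_mul.
  case: (ltnP (c1 y) s) => hs.
    have : colr1 K s (c1 y) == 0 by rewrite colr1_eq0.
    rewrite /c1 hC => /eqP h0; rewrite /c0 in h1 h4; lia.
  have := colr1_lb K hs; rewrite /c1 hC.
  move: h2 h4; rewrite /c0 /c1.
  case: (count negb (take x w)) => [|m]; first lia.
  rewrite mulnS /=; lia.
Qed.
End Main.


Lemma svt_count_eq k r n : 0 < k -> 0 < r ->
  svt_count (two_row n) (rho_kr k r) =
  count (Pw k r n) (allbs (svtN (two_row n) (rho_kr k r))).
Proof.
move=> hk hr; rewrite /svt_count cardE.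
set A := enum _.
have inj : {in A &, injective (hseq (k:=k) (r:=r) (n:=n))}.
  move=> f g; rewrite !mem_enum !inE => hf hg e.
  by rewrite (proj2 (part_i hk hr hf)) (proj2 (part_i hk hr hg)) e.
rewrite -(size_map (hseq (k:=k) (r:=r) (n:=n))) -size_filter.
apply: perm_size; apply: uniq_perm.
- by rewrite (map_inj_in_uniq inj) enum_uniq.
- by rewrite filter_uniq // allbs_uniq.
move=> w; rewrite mem_filter mem_allbs; apply/mapP/idP.
- case=> f; rewrite mem_enum inE => hf ->.
  by rewrite (proj1 (part_i hk hr hf)) size_hseq eqxx.
- case/andP => hP /eqP hs; have [h1 h2] := part_ii hk hr hP hs.
  by exists (build k r n w) => //; rewrite mem_enum inE.
Qed.

Lemma count_Pw k r n : 0 < k -> 0 < r ->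
  count (Pw k r n) (allbs (svtN (two_row n) (rho_kr k r))) =
  count (fun w => bal k.-1 r.-1 w && (count negb w == n)) (allbs (k.-1 * n + r.-1 + n)).
Proof.
move=> hk hr; rewrite (hN n hk hr) addn1 /= count_cat !count_map.
rewrite (@eq_count _ (preim (cons true) (Pw k r n)) pred0) // count_pred0 add0n.
by apply: eq_count.
Qed.

Lemma final_alg K s n :
  ((s.+1)%:R / (K.+1 * n + s.+1)%:R * ('C(K.+1 * n + s.+1, n))%:R : rat)%R = gcf K n s.
Proof.
rewrite /gcf.
have eL : (K.+1 * n + s.+1 = (K * n + s + n).+1)%N by rewrite mulSn; lia.
rewrite eL.
case: n eL => [|n'] eL.
  rewrite /= !bin0 mulr0 subr0 mulr1 muln0 add0n addn0 divff //.
  by rewrite pnatr_eq0.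
set L := (K * n'.+1 + s + n'.+1)%N.
have hL : ((L.+1)%:R : rat) != 0%R by rewrite pnatr_eq0.
rewrite binS.
have hAB : (n'.+1 * 'C(L, n'.+1) = (K * n'.+1 + s + 1) * 'C(L, n'))%N.
  rewrite mul_bin_left; congr (_ * _)%N; rewrite /L; lia.
set A := 'C(L, n'.+1) in hAB *; set B := 'C(L, n') in hAB *.
have E : (L.+1 * A = s.+1 * (A + B) + L.+1 * K * B)%N.
  rewrite /L; nia.
have E' : ((L.+1)%:R * A%:R = (s.+1)%:R * (A%:R + B%:R) + (L.+1)%:R * K%:R * B%:R :> rat)%R.
  by rewrite -!natrM -natrD -natrM -natrD E.
set x := (A%:R : rat); set y := (B%:R : rat).
have hx : x = (((s.+1)%:R * (x + y) + (L.+1)%:R * K%:R * y) / (L.+1)%:R)%R.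
  by rewrite -E' mulrC mulKf.
rewrite natrD -/x -/y {2}hx; field; by rewrite addrC natr1.
Qed.

Unset Implicit Arguments.
Local Open Scope ring_scope.

Theorem theorem3 (k r n : nat) (hk : (1 <= k)%N) (hr : (1 <= r)%N) :
  (r%:R / (k * n + r)%:R * ('C(k * n + r, n))%:R : rat)
  = (svt_count (two_row n) (rho_kr k r))%:R.
Proof.
rewrite svt_count_eq // count_Pw // (@count_bal k.-1 _ n r.-1 erefl).
rewrite -(final_alg (k.-1) (r.-1) n) !prednK //.
Qed.
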